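(* For any odd $b\geq1$ and any $n>b$, the set $R_n^*(b)$ listed in $\prec$ order (increasing) is a $5$-Gray code: any two consecutive sequences in the list differ in at most $5$ positions.
   Context: A restricted growth function of length $n$ is an integer sequence $s_1\ldots s_n$ with $s_1=0$ and $0\leq s_{i+1}\leq \max\{s_j\}_{j=1}^i+1$ for $1\leq i\leq n-1$; $R_n$ is the set of these. For an integer $b\geq1$, $R^*_n(b)=\{s_1\ldots s_n\in R_n: \max_i s_i= b\}$. The Reflected Gray Code Order $\prec$ on length-$n$ sequences of nonnegative integers: $s_1\ldots s_n\prec t_1\ldots t_n$ if, for the smallest $k$ with $s_k\neq t_k$, either $\sum_{i=1}^{k-1}s_i$ is even and $s_k<t_k$, or $\sum_{i=1}^{k-1}s_i$ is odd and $s_k>t_k$. A list of same-length sequences is a $d$-Gray code if the Hamming distance (number of differing positions) between successive sequences is at most $d$. *)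

(* Defs.v *)
From mathcomp Require Import all_boot.
Set Implicit Arguments. Unset Strict Implicit. Unset Printing Implicit Defensive.

(* Sequences s_1 ... s_n are represented as s : seq nat, with s_i = nth 0 s (i-1). *)

Definition seqmax (s : seq nat) : nat := foldr maxn 0 s.

Definition is_rgf (s : seq nat) : bool :=
  (nth 0 s 0 == 0) &&
  all (fun i => nth 0 s i <= seqmax (take i s) + 1) (iota 1 (size s).-1).

Definition in_R (n : nat) (s : seq nat) : bool := (size s == n) && is_rgf s.

Definition in_Rstar (n b : nat) (s : seq nat) : bool := in_R n s && (seqmax s == b).

Definition rgc_lt (s t : seq nat) : Prop :=
  exists k : nat, k < size s /\ k < size t /\
    take k s = take k t /\ nth 0 s k != nth 0 t k /\
    (if ~~ odd (sumn (take k s)) then nth 0 s k < nth 0 t k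
     else nth 0 t k < nth 0 s k).

Definition hamming (s t : seq nat) : nat :=
  count (fun p : nat * nat => p.1 != p.2) (zip s t).

(* Main.v *)
Require Import Defs.
From mathcomp Require Import all_boot zify.
Set Implicit Arguments. Unset Strict Implicit. Unset Printing Implicit Defensive.

Fixpoint okr (M : nat) (s : seq nat) : bool :=
  match s with [::] => true | x :: s' => (x <= M.+1) && okr (maxn M x) s' end.

Definition Vm (b M r : nat) (v : seq nat) : bool :=
  [&& size v == r, okr M v & maxn M (seqmax v) == b].

Fixpoint G (b M : nat) (e : bool) (r : nat) : seq nat :=
  match r with
  | 0 => [::]
  | r'.+1 => let v := if e then minn M.+1 b else (if b - M <= r' then 0 else M.+1) in
             v :: G b (maxn M v) (e (+) odd v) r'
  end.

Definition ltc (c : bool) (s t : seq nat) : Prop :=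
  exists k : nat, k < size s /\ k < size t /\
    take k s = take k t /\ nth 0 s k != nth 0 t k /\
    (if ~~ (c (+) odd (sumn (take k s))) then nth 0 s k < nth 0 t k
     else nth 0 t k < nth 0 s k).

Lemma all_okr M u :
  all (fun i => nth 0 u i <= maxn M (seqmax (take i u)) + 1) (iota 0 (size u)) = okr M u.
Proof.
elim: u M => [|x u IH] M //=.
rewrite /= maxn0 addn1; congr andb.
rewrite -(IH (maxn M x)) -[1]/(1 + 0) iotaDl all_map; apply: eq_all => i /=.
by rewrite add1n /= /seqmax /= maxnA.
Qed.

Lemma is_rgf_cons x u : is_rgf (x :: u) = (x == 0) && okr x u.
Proof.
rewrite /is_rgf /=; congr andb.
rewrite -all_okr -[1]/(1 + 0) iotaDl all_map; apply: eq_all => i /=.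
by rewrite add1n /= /seqmax /=.
Qed.

Lemma RstarE n b s : 0 < n ->
  in_Rstar n b s <-> exists s1, s = 0 :: s1 /\ Vm b 0 n.-1 s1.
Proof.
move=> n0; split.
  case: s => [|x s1]; rewrite /in_Rstar /in_R.
    by move=> /andP [/andP [/eqP sz _] _]; rewrite -sz in n0.
  rewrite is_rgf_cons => /andP [/andP [/eqP sz /andP [/eqP -> ok]] mx].
  exists s1; split=> //; rewrite /Vm ok -sz /=.
  by rewrite eqxx /=; move: mx; rewrite /seqmax /=.
move=> [s1 [-> /and3P [/eqP sz ok mx]]].
rewrite /in_Rstar /in_R is_rgf_cons ok /= sz prednK //= eqxx.
by move: mx; rewrite /seqmax /=.
Qed.

Lemma Vm_cons b M r x v : Vm b M r.+1 (x :: v) = (x <= M.+1) && Vm b (maxn M x) r v.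
Proof.
rewrite /Vm /= eqSS /seqmax /= maxnA.
by case: (size v == r); case: (x <= M.+1).
Qed.

Lemma Vm_nil b M r : Vm b M r [::] = (r == 0) && (M == b).
Proof. by rewrite /Vm /= maxn0 eq_sym; case: (r == 0). Qed.

Lemma Vm_bound b M r v : Vm b M r v -> M <= b /\ b - M <= r.
Proof.
elim: v M r => [|x v IH] M [|r] //.
- by rewrite Vm_nil /= => /eqP ->; split => //; rewrite subnn.
rewrite Vm_cons => /andP [hx /IH [h1 h2]]; lia.
Qed.

Lemma G_valid b r M e : M <= b -> b - M <= r -> Vm b M r (G b M e r).
Proof.
elim: r M e => [|r IH] M e hM hr /=.
  rewrite Vm_nil /=; apply/eqP; lia.
rewrite Vm_cons; apply/andP; split.
  by case: e; last case: ifP => ?; lia.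
by apply: IH; case: e; try case: ifP => ?; lia.
Qed.

Lemma ltc_cons c x w v : ltc c (x :: w) (x :: v) <-> ltc (c (+) odd x) w v.
Proof.
split.
  move=> [[|k] [h1 [h2 [h3 [h4 h5]]]]]; first by rewrite /= eqxx in h4.
  exists k; move: h3 h5 => /= [h3]; rewrite oddD addbA => h5; do !split => //.
move=> [k [h1 [h2 [h3 [h4 h5]]]]]; exists k.+1 => /=.
rewrite !ltnS oddD addbA; do !split => //; by rewrite h3.
Qed.

Lemma ltc_swap c w v : ltc c w v -> ltc (~~ c) v w.
Proof.
move=> [k [h1 [h2 [h3 [h4 h5]]]]]; exists k; rewrite -h3 eq_sym.
by do !split => //; move: h5; case: c; case: (odd _).
Qed.

Lemma greedy b r M e v : Vm b M r v -> (forall w, Vm b M r w -> ~ ltc e w v) ->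
  v = G b M e r.
Proof.
elim: r M e v => [|r IH] M e [|x v] //.
move=> hv hmin; have := hv; rewrite Vm_cons => /andP [hx hv'].
have [hb1 hb2] := Vm_bound hv; have [hc1 hc2] := Vm_bound hv'.
rewrite /=.
set y := (if e then _ else _).
have xy : x = y.
  apply/eqP; apply/negPn/negP => hneq.
  apply: (hmin (y :: G b (maxn M y) false r)).
    rewrite Vm_cons; apply/andP; split; last apply: G_valid.
    - by rewrite /y; case: (e); last case: ifP => ?; lia.
    - by rewrite /y; case: (e); last case: ifP => ?; lia.
    - by rewrite /y; case: (e); last case: ifP => ?; lia.
  exists 0; rewrite /= eq_sym hneq; do !split => //.
  by move: hneq; rewrite /y; case: (e) => /=; last case: ifP => ?; lia.
rewrite -xy; congr cons; apply: IH => // w hw hlt.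
apply: (hmin (x :: w)); first by rewrite Vm_cons hx hw.
by apply/ltc_cons.
Qed.

Lemma G_forced b r M e : b - M = r -> M <= b -> G b M e r = iota M.+1 r.
Proof.
elim: r M e => [|r IH] M e h1 h2 //=.
have ->: (if e then minn M.+1 b else if b - M <= r then 0 else M.+1) = M.+1.
  by case: (e); last case: ifP => ?; lia.
by rewrite (maxn_idPr (leqnSn M)) IH //; lia.
Qed.

Lemma G_even b r M : M <= b -> b - M <= r ->
  G b M false r = nseq (r - (b - M)) 0 ++ iota M.+1 (b - M).
Proof.
elim: r M => [|r IH] M h1 h2.
  by have ->: b - M = 0 by lia.
case: (leqP (b - M) r) => h3.
  by rewrite /= h3 maxn0 IH // subSn.
have h4 : b - M = r.+1 by lia.
by rewrite G_forced // h4 subnn.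
Qed.

Lemma G_true b M r : M < b -> G b M true r.+1 = M.+1 :: G b M.+1 (odd M) r.
Proof.
move=> h /=; have ->: minn M.+1 b = M.+1 by lia.
by rewrite (maxn_idPr (leqnSn M)) /= negbK.
Qed.

Lemma G_true_b b r : G b b true r.+1 = b :: G b b (~~ odd b) r.
Proof. by rewrite /= (minn_idPr (leqnSn b)) maxnn. Qed.

Lemma hamming_cons a c x y : hamming (a :: x) (c :: y) = (a != c) + hamming x y.
Proof. by []. Qed.

Lemma hamming_cat x1 x2 y1 y2 : size x1 = size x2 ->
  hamming (x1 ++ y1) (x2 ++ y2) = hamming x1 x2 + hamming y1 y2.
Proof. by move=> h; rewrite /hamming zip_cat // count_cat. Qed.

Lemma hamming_id x : hamming x x = 0.
Proof. by elim: x => //= a x IH; rewrite hamming_cons eqxx IH. Qed.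

Lemma hamming_sym x y : hamming x y = hamming y x.
Proof.
elim: x y => [|a x IH] [|c y] //.
by rewrite !hamming_cons IH eq_sym.
Qed.

Definition nz (v : nat) : bool := v != 0.

Lemma hamming_nz x y :
  hamming x y <= count nz x + count nz y.
Proof.
elim: x y => [|a x IH] [|c y] //=.
rewrite hamming_cons; have := IH y.
have : (a != c) <= (a != 0) + (c != 0).
  by case: a => [|a]; case: c => [|c] //=; case: (_ == _).
rewrite /nz; lia.
Qed.

Lemma key b M a r : odd b -> a <= M -> maxn M a.+1 <= b -> b - M <= r ->
  hamming (G b (maxn M a) (~~ odd a) r) (G b (maxn M a.+1) (~~ odd a) r) <= 4.
Proof.
move=> ob haM hb hr.
have [lt|eq] : a < M \/ a = M by lia.
  have e1 : maxn M a = M by lia.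
  have e2 : maxn M a.+1 = M by lia.
  by rewrite e1 e2 hamming_id.
subst M; rewrite maxnn (maxn_idPr (leqnSn a)).
case oa: (odd a) => /=.
  rewrite !G_even //; try lia.
  set z := r - (b - a).
  have h1 : r - (b - a.+1) = z.+1 by rewrite /z; lia.
  have h2 : b - a = (b - a.+1).+1 by lia.
  rewrite h1 h2 /=.
  have -> : 0 :: nseq z 0 ++ iota a.+2 (b - a.+1) = nseq z 0 ++ 0 :: iota a.+2 (b - a.+1).
    by elim: (z) => //= k ->.
  rewrite hamming_cat ?size_nseq // hamming_id /= hamming_cons hamming_id.
  by case: (_ != _).
have hab : a < b.
  rewrite ltn_neqAle; apply/andP; split; last by lia.
  by apply/eqP => eab; rewrite eab ob in oa.
case: r hr => [|r1] hr; first by lia.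
rewrite G_true // oa.
have [hlt|heq] : a.+1 < b \/ a.+1 = b by lia.
2:{
  by rewrite heq G_true_b ob /= hamming_cons eqxx hamming_id. }
rewrite G_true // [odd a.+1]/= oa.
case: r1 hr => [|r2] hr; first by lia.
have ha3 : a.+2 < b.
  rewrite ltn_neqAle; apply/andP; split; last by lia.
  by apply/eqP => eab; rewrite -eab /= oa in ob.
rewrite G_true // [odd a.+2]/= oa !G_even //; try lia.
set D := b - a.+3.
have hD : b - a.+1 = D.+2 by rewrite /D; lia.
have [z1 hz] : exists z1, r2 - D = z1.+1 by exists (r2 - D).-1; rewrite /D; lia.
have hz' : r2.+1 - D.+2 = z1 by lia.
rewrite hD hz hz' /= hamming_cons.
have -> : nseq z1 0 ++ [:: a.+2, a.+3 & iota a.+4 D] =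
          (nseq z1 0 ++ [:: a.+2; a.+3]) ++ iota a.+4 D by rewrite -catA.
have -> : [:: a.+3, 0 & nseq z1 0 ++ iota a.+4 D] =
          [:: a.+3, 0 & nseq z1 0] ++ iota a.+4 D by [].
rewrite hamming_cat; last by rewrite size_cat /= !size_nseq; lia.
rewrite hamming_id addn0.
have := hamming_nz (nseq z1 0 ++ [:: a.+2; a.+3]) [:: a.+3, 0 & nseq z1 0].
rewrite count_cat !count_nseq /= !mul0n.
rewrite count_nseq /= mul0n; case: (_ != _) => /=; lia.
Qed.

Lemma ltc_head c x y v w : ltc c (x :: v) (y :: w) -> x != y ->
  if ~~ c then x < y else y < x.
Proof.
move=> [[|k] [h1 [h2 [h3 [h4 h5]]]]] hxy.
  by move: h5; rewrite /= addbF.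
by move: h3 => /= [exy]; rewrite exy eqxx in hxy.
Qed.

Lemma ltc_head_intro c x y v w : (if ~~ c then x < y else y < x) ->
  ltc c (x :: v) (y :: w).
Proof.
move=> h; exists 0; rewrite /= addbF; do !split => //.
by case: (c) h => /= h; [rewrite eq_sym|]; rewrite neq_ltn h ?orbT.
Qed.

Lemma main_gen b : odd b -> forall N M c v w, Vm b M N v -> Vm b M N w -> ltc c v w ->
  (forall u, Vm b M N u -> ~ (ltc c v u /\ ltc c u w)) -> hamming v w <= 5.
Proof.
move=> ob; elim=> [|N IH] M c v w.
  by case: v => [|x v] // _ _ [k [hk _]].
case: v => [|x v]; first by rewrite Vm_nil.
case: w => [|y w]; first by move=> _; rewrite Vm_nil.
move=> hv hw hlt hcons.
move: (hv) (hw); rewrite !Vm_cons => /andP [hx hv'] /andP [hy hw'].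
have [hb1 hb2] := Vm_bound hv'; have [hb3 hb4] := Vm_bound hw'.
case: (eqVneq x y) => [exy|nxy].
  subst y; rewrite hamming_cons eqxx add0n.
  apply: (IH (maxn M x) (c (+) odd x)) => //; first by apply/ltc_cons.
  move=> u hu [h1 h2]; apply: (hcons (x :: u)); first by rewrite Vm_cons hx.
  by split; apply/ltc_cons.
have hdir := ltc_head hlt nxy.
have ev : v = G b (maxn M x) (~~ (c (+) odd x)) N.
  apply: greedy => // u hu /ltc_swap; rewrite negbK => h.
  apply: (hcons (x :: u)); first by rewrite Vm_cons hx.
  by split; [apply/ltc_cons | apply: ltc_head_intro].
have ew : w = G b (maxn M y) (c (+) odd y) N.
  apply: greedy => // u hu h.
  apply: (hcons (y :: u)); first by rewrite Vm_cons hy.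
  by split; [apply: ltc_head_intro | apply/ltc_cons].
rewrite hamming_cons ev ew.
case: (c) hdir hcons => /= hdir hcons.
  have exy : x = y.+1.
    apply/eqP; apply/negPn/negP => hne.
    apply: (hcons (y.+1 :: G b (maxn M y.+1) false N)).
      rewrite Vm_cons; apply/andP; split; first lia.
      apply: G_valid; lia.
    by split; apply: ltc_head_intro => /=; lia.
  subst x; rewrite hamming_sym.
  have -> : ~~ ~~ odd y.+1 = ~~ odd y by rewrite /=; case: (odd y).
  apply: (leq_trans (leq_add (leq_b1 _) (key ob (_ : y <= M) _ _))); lia.
have exy : y = x.+1.
  apply/eqP; apply/negPn/negP => hne.
  apply: (hcons (x.+1 :: G b (maxn M x.+1) false N)).
    rewrite Vm_cons; apply/andP; split; first lia.
    apply: G_valid; lia.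
  by split; apply: ltc_head_intro => /=; lia.
subst y.
have -> : odd x.+1 = ~~ odd x by [].
apply: (leq_trans (leq_add (leq_b1 _) (key ob (_ : x <= M) _ _))); lia.
Qed.

Theorem theorem3 (b n : nat) (s t : seq nat) :
  odd b -> 1 <= b -> b < n ->
  in_Rstar n b s -> in_Rstar n b t ->
  rgc_lt s t ->
  (forall u : seq nat, in_Rstar n b u -> ~ (rgc_lt s u /\ rgc_lt u t)) ->
  hamming s t <= 5.
Proof.
move=> ob b1 bn hs ht hlt hcons.
have n0 : 0 < n by lia.
have [s1 [es hs1]] := (RstarE b s n0).1 hs.
have [t1 [et ht1]] := (RstarE b t n0).1 ht.
subst s t; rewrite hamming_cons eqxx add0n.
apply: (main_gen ob hs1 ht1).
  by apply/(ltc_cons false 0); exact: hlt.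
move=> u hu [h1 h2]; apply: (hcons (0 :: u)).
  by apply/(RstarE b _ n0); exists u.
split.
  by have := (ltc_cons false 0 s1 u).2 h1.
by have := (ltc_cons false 0 u t1).2 h2.
Qed.
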